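(* For every $w\in\mathbb{C}$, $$\tau|_{L_w\cap\Omega}\le\hat\omega|_{L_w\cap\Omega}\le 2e^{-\rho_1}\,\tau|_{L_w\cap\Omega},$$ as inequalities of real $(1,1)$-forms on the surface $L_w\cap\Omega$ (away from the zero section, where $e^{-\rho_1}=\infty$).
   Context: Let $E$ be the total space of $\mathcal{O}_{\mathbb{P}^1}(-1)\oplus\mathcal{O}_{\mathbb{P}^1}(-1)\to\mathbb{P}^1$, with zero section $P_0$. On the chart with inhomogeneous coordinate $z$ on $\mathbb{P}^1$ use standard fibre coordinates $(\xi_1,\xi_2)$, and define the (globally defined) functions $e^{\rho}=(1+|z|^2)(|\xi_1|^2+|\xi_2|^2)$ and $e^{\rho_1}=(1+|z|^2)|\xi_1|^2$ (the squared norms of $\xi$ and its first component for the metric $h\oplus h$, $h$ the hermitian metric on $\mathcal{O}(-1)$ with curvature $-\omega_{FS}$). Let $\omega_{FS}=\sqrt{-1}\partial\bar\partial\log(1+|z|^2)$ (pulled back to $E$), $\hat\omega=\omega_{FS}+\sqrt{-1}\partial\bar\partial e^{\rho}$ (a Kähler form on $E$), $\tau=\sqrt{-1}\partial\bar\partial e^{\rho_1}$ (a smooth closed nonnegative $(1,1)$-form), and $\Omega=\{\rho<0\}\subset E$. For $w\in\mathbb{C}$, $L_w\subset E$ is the closure of $\{\xi_2=w\xi_1\}$, a smooth surface containing $P_0$ (isomorphic to $\mathbb{C}^2$ blown up at one point). *)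

(* Defs.v *)
From Stdlib Require Import Reals.
From Coquelicot Require Import Coquelicot.
Open Scope R_scope.

Definition nsq (c : C) : R := (Re c) ^ 2 + (Im c) ^ 2.

(* Chart of E over {z in C}: coordinates (z, xi1, xi2).  Potentials: *)
Definition e_rho (z xi1 xi2 : C) : R := (1 + nsq z) * (nsq xi1 + nsq xi2).
Definition e_rho1 (z xi1 xi2 : C) : R := (1 + nsq z) * nsq xi1.
Definition pot_FS (z xi1 xi2 : C) : R := ln (1 + nsq z).
Definition pot_hat (z xi1 xi2 : C) : R := pot_FS z xi1 xi2 + e_rho z xi1 xi2.

(* Restriction (pullback) to L_w = {xi2 = w xi1}, with holomorphic
   coordinates (z, t) on L_w via (z,t) |-> (z, t, w t). *)
Definition restrL (w : C) (f : C -> C -> C -> R) : C -> C -> R :=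
  fun z t => f z t (w * t)%C.

(* Real (1,1)-form i ddbar f of a real function f on C^2, evaluated on the
   pair (V, JV) of a real tangent vector V = (u,v) at (z,t):
   D^2 f[V,V] + D^2 f[JV,JV]  (= 4 sum f_{j kbar} V_j conj V_k). *)
Definition ddc (f : C -> C -> R) (z t u v : C) : R :=
  Derive_n (fun s : R => f (z + RtoC s * u)%C (t + RtoC s * v)%C) 2 0
  + Derive_n (fun s : R => f (z + RtoC s * (Ci * u))%C (t + RtoC s * (Ci * v))%C) 2 0.

(* Main.v *)
Require Import Defs.
From Stdlib Require Import Reals Lra Psatz.
From Coquelicot Require Import Coquelicot.
Open Scope R_scope.

Lemma D2 (f f1 f2 : R -> R) x :
  (forall s, is_derive f s (f1 s)) -> (forall s, is_derive f1 s (f2 s)) ->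
  Derive_n f 2 x = f2 x.
Proof.
  intros H1 H2. simpl.
  rewrite (Derive_ext _ f1). now apply is_derive_unique.
  intros s; now apply is_derive_unique.
Qed.

Section S.
Variables z1 z2 t1 t2 u1 u2 v1 v2 K : R.
Definition A s := 1 + (z1+s*u1)^2 + (z2+s*u2)^2.
Definition B s := (t1+s*v1)^2 + (t2+s*v2)^2.
Definition A1 s := 2*u1*(z1+s*u1) + 2*u2*(z2+s*u2).
Definition B1 s := 2*v1*(t1+s*v1) + 2*v2*(t2+s*v2).
Definition A2 := 2*(u1^2+u2^2).
Definition B2 := 2*(v1^2+v2^2).

Lemma Apos s : 0 < A s.
Proof. unfold A. pose proof (pow2_ge_0 (z1+s*u1)); pose proof (pow2_ge_0 (z2+s*u2)); lra. Qed.

Lemma D2e : Derive_n (fun s => A s * B s) 2 0 =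
   A2 * B 0 + 2 * A1 0 * B1 0 + A 0 * B2.
Proof.
  apply (D2 _ (fun s => A1 s * B s + A s * B1 s) (fun s => A2 * B s + 2 * A1 s * B1 s + A s * B2)).
  - intros s; unfold A, B, A1, B1; auto_derive; auto; ring.
  - intros s; unfold A, B, A1, B1, A2, B2; auto_derive; auto; ring.
Qed.

Lemma D2h : Derive_n (fun s => ln (A s) + K * (A s * B s)) 2 0 =
   (A2 * A 0 - A1 0 ^ 2) / (A 0)^2 + K * (A2 * B 0 + 2 * A1 0 * B1 0 + A 0 * B2).
Proof.
  apply (D2 _ (fun s => A1 s / A s + K * (A1 s * B s + A s * B1 s))
      (fun s => (A2 * A s - A1 s ^ 2) / (A s)^2 + K * (A2 * B s + 2 * A1 s * B1 s + A s * B2))).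
  - intros s; pose proof (Apos s); unfold A, B, A1, B1 in *; auto_derive.
    + lra.
    + field; lra.
  - intros s; pose proof (Apos s); unfold A, B, A1, B1, A2, B2 in *; auto_derive.
    + lra.
    + field; lra.
Qed.
End S.
Lemma ddc_e1 w1 w2 z1 z2 t1 t2 u1 u2 v1 v2 :
  ddc (restrL (w1,w2) e_rho1) (z1,z2) (t1,t2) (u1,u2) (v1,v2) =
  Derive_n (fun s => A z1 z2 u1 u2 s * B t1 t2 v1 v2 s) 2 0 +
  Derive_n (fun s => A z1 z2 (-u2) u1 s * B t1 t2 (-v2) v1 s) 2 0.
Proof.
  unfold ddc; f_equal; apply Derive_n_ext; intros s;
  unfold restrL, e_rho1, nsq, A, B; simpl; ring.
Qed.
Lemma ddc_h w1 w2 z1 z2 t1 t2 u1 u2 v1 v2 :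
  ddc (restrL (w1,w2) pot_hat) (z1,z2) (t1,t2) (u1,u2) (v1,v2) =
  Derive_n (fun s => ln (A z1 z2 u1 u2 s) + (1+w1^2+w2^2) * (A z1 z2 u1 u2 s * B t1 t2 v1 v2 s)) 2 0 +
  Derive_n (fun s => ln (A z1 z2 (-u2) u1 s) + (1+w1^2+w2^2) * (A z1 z2 (-u2) u1 s * B t1 t2 (-v2) v1 s)) 2 0.
Proof.
  unfold ddc; f_equal; apply Derive_n_ext; intros s;
  unfold restrL, pot_hat, pot_FS, e_rho, nsq, A, B; simpl; (f_equal; [f_equal; ring | ring]).
Qed.
Lemma sqpos x : x <> 0 -> 0 < x^2.
Proof. intros H; replace (x^2) with (Rsqr x) by (unfold Rsqr; ring); now apply Rsqr_pos_lt. Qed.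
Theorem lemma3p4 (w z t : C) (HOmega : e_rho z t (w * t)%C < 1) :
  (forall u v : C,
     ddc (restrL w e_rho1) z t u v <= ddc (restrL w pot_hat) z t u v) /\
  (t <> RtoC 0 ->
   forall u v : C,
     ddc (restrL w pot_hat) z t u v
     <= 2 / e_rho1 z t (w * t)%C * ddc (restrL w e_rho1) z t u v).
Proof.
  destruct w as [w1 w2], z as [z1 z2], t as [t1 t2].
  assert (HO : (1+z1^2+z2^2) * (1+w1^2+w2^2) * (t1^2+t2^2) < 1).
  { unfold e_rho, nsq in HOmega; simpl in HOmega. nra. }
  clear HOmega.
  assert (He1 : e_rho1 (z1,z2) (t1,t2) ((w1,w2) * (t1,t2))%C = (1+z1^2+z2^2)*(t1^2+t2^2)).
  { unfold e_rho1, nsq; simpl; ring. }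
  rewrite He1; clear He1.
  set (a := 1+z1^2+z2^2). set (b := t1^2+t2^2). set (K := 1+w1^2+w2^2).
  assert (Ha : 1 <= a) by (unfold a; nra).
  assert (Hb : 0 <= b) by (unfold b; nra).
  assert (HK : 1 <= K) by (unfold K; nra).
  assert (key : forall u1 u2 v1 v2,
    ddc (restrL (w1,w2) e_rho1) (z1,z2) (t1,t2) (u1,u2) (v1,v2)
      = 4*((v1^2+v2^2) + (u1*t1-u2*t2+z1*v1-z2*v2)^2 + (u1*t2+u2*t1+z1*v2+z2*v1)^2) /\
    ddc (restrL (w1,w2) pot_hat) (z1,z2) (t1,t2) (u1,u2) (v1,v2)
      = 4*(u1^2+u2^2)/a^2 + K * ddc (restrL (w1,w2) e_rho1) (z1,z2) (t1,t2) (u1,u2) (v1,v2)).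
  { intros u1 u2 v1 v2. rewrite ddc_e1, ddc_h, !D2e, !D2h.
    unfold A, A1, A2, B, B1, B2. fold K. split.
    - ring.
    - replace (1 + (z1 + 0 * u1) ^ 2 + (z2 + 0 * u2) ^ 2) with a by (unfold a; ring).
      replace (1 + (z1 + 0 * (-u2)) ^ 2 + (z2 + 0 * u1) ^ 2) with a by (unfold a; ring).
      assert (a <> 0) by lra; unfold a in *; field; auto. }
  split.
  - intros [u1 u2] [v1 v2]. destruct (key u1 u2 v1 v2) as [E1 E2].
    rewrite E2, E1.
    set (E := 4*((v1^2+v2^2) + (u1*t1-u2*t2+z1*v1-z2*v2)^2 + (u1*t2+u2*t1+z1*v2+z2*v1)^2)).
    assert (0 <= E) by (unfold E; pose proof (pow2_ge_0 v1); pose proof (pow2_ge_0 v2); pose proof (pow2_ge_0 (u1*t1-u2*t2+z1*v1-z2*v2)); pose proof (pow2_ge_0 (u1*t2+u2*t1+z1*v2+z2*v1)); lra).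
    assert (0 <= 4*(u1^2+u2^2)/a^2).
    { apply Rdiv_le_0_compat; nra. }
    nra.
  - intros Ht [u1 u2] [v1 v2]. destruct (key u1 u2 v1 v2) as [E1 E2].
    rewrite E2, E1.
    assert (Hb' : 0 < b).
    { unfold b. destruct (Req_dec t1 0); destruct (Req_dec t2 0).
      - subst; exfalso; apply Ht; reflexivity.
      - pose proof (sqpos t2 H0); pose proof (pow2_ge_0 t1); lra.
      - pose proof (sqpos t1 H); pose proof (pow2_ge_0 t2); lra.
      - pose proof (sqpos t1 H); pose proof (pow2_ge_0 t2); lra. }
    set (E := 4*((v1^2+v2^2) + (u1*t1-u2*t2+z1*v1-z2*v2)^2 + (u1*t2+u2*t1+z1*v2+z2*v1)^2)).
    assert (HE : 0 <= E) by (unfold E; pose proof (pow2_ge_0 v1); pose proof (pow2_ge_0 v2); pose proof (pow2_ge_0 (u1*t1-u2*t2+z1*v1-z2*v2)); pose proof (pow2_ge_0 (u1*t2+u2*t1+z1*v2+z2*v1)); lra).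
    assert (CS : 4*(u1^2+u2^2)*b <= a*E).
    { unfold E, a, b.
      set (X1 := u1*t1-u2*t2+z1*v1-z2*v2). set (X2 := u1*t2+u2*t1+z1*v2+z2*v1).
      pose proof (pow2_ge_0 (v1+z1*X1+z2*X2)); pose proof (pow2_ge_0 (v2+z1*X2-z2*X1)).
      assert (Hid : (1 + z1 ^ 2 + z2 ^ 2) * (4 * (v1 ^ 2 + v2 ^ 2 + X1 ^ 2 + X2 ^ 2)) - 4 * (u1 ^ 2 + u2 ^ 2) * (t1 ^ 2 + t2 ^ 2)
         = 4*((v1+z1*X1+z2*X2)^2 + (v2+z1*X2-z2*X1)^2)) by (unfold X1, X2; ring).
      lra. }
    assert (Hab : 0 < a*b) by (apply Rmult_lt_0_compat; lra).
    apply (Rmult_le_reg_l (a^2*b)). apply Rmult_lt_0_compat; [apply pow_lt; lra | lra].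
    replace (a ^ 2 * b * (4 * (u1 ^ 2 + u2 ^ 2) / a ^ 2 + K * E)) with
      (4 * (u1 ^ 2 + u2 ^ 2) * b + a^2*b*K*E) by (field; lra).
    replace (a ^ 2 * b * (2 / (a * b) * E)) with (2*a*E) by (field; lra).
    assert (HH1 : a*K*b*E <= 1*E) by (apply Rmult_le_compat_r; [lra | change (a*K*b<1) in HO; lra]).
    assert (HH2 : a*(a*K*b*E) <= a*(1*E)) by (apply Rmult_le_compat_l; lra).
    replace (a^2*b*K*E) with (a*(a*K*b*E)) by ring. lra.
Qed.
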